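(* Let $G$ be a connected graph of order at least three. Then $\gamma(G)=\gamma_{\rm cer}(G)$ if and only if $G$ has a $\gamma$-set $D$ such that every vertex in $D$ has at least two neighbors in $V_G-D$.
   Context: All graphs are finite and simple; $V_G$ is the vertex set of $G$ and $N_G(v)$ the open neighborhood of $v$. A set $D\subseteq V_G$ is a dominating set of $G$ if every vertex of $V_G-D$ has a neighbor in $D$; $\gamma(G)$ is the minimum cardinality of a dominating set, and a $\gamma$-set is a dominating set of cardinality $\gamma(G)$. A set $D\subseteq V_G$ is a certified dominating set of $G$ if $D$ is a dominating set of $G$ and every vertex of $D$ has either zero or at least two neighbors in $V_G-D$; $\gamma_{\rm cer}(G)$ is the minimum cardinality of a certified dominating set of $G$. *)

(* Defs.v *)
From mathcomp Require Import all_boot.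
Set Implicit Arguments. Unset Strict Implicit. Unset Printing Implicit Defensive.

Definition simple_graph (T : finType) (e : rel T) : Prop :=
  symmetric e /\ irreflexive e.

Definition connected_graph (T : finType) (e : rel T) : Prop :=
  forall x y : T, connect e x y.

Definition nbhd (T : finType) (e : rel T) (v : T) : {set T} := [set u | e v u].

Definition dominating (T : finType) (e : rel T) (D : {set T}) : bool :=
  [forall v, (v \notin D) ==> [exists u, (u \in D) && e v u]].

Definition certified_dominating (T : finType) (e : rel T) (D : {set T}) : bool :=
  dominating e D &&
  [forall v in D, (#|nbhd e v :\: D| == 0) || (2 <= #|nbhd e v :\: D|)].

(* gamma(G): minimum cardinality of a dominating set (V itself dominates,
   so the default #|T| is never below the true minimum) *)
Definition gamma (T : finType) (e : rel T) : nat :=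
  \big[minn/#|T|]_(D : {set T} | dominating e D) #|D|.

(* gamma_cer(G): minimum cardinality of a certified dominating set
   (V itself is certified dominating) *)
Definition gamma_cer (T : finType) (e : rel T) : nat :=
  \big[minn/#|T|]_(D : {set T} | certified_dominating e D) #|D|.

Definition gamma_set (T : finType) (e : rel T) (D : {set T}) : bool :=
  dominating e D && (#|D| == gamma e).

(* Main.v *)
Require Import Defs.
From mathcomp Require Import all_boot.

Lemma bigmin_le (T : finType) (P : pred {set T}) (D : {set T}) :
  P D -> \big[minn/#|T|]_(X : {set T} | P X) #|X| <= #|D|.
Proof.
move=> PD; rewrite unlock.
have : D \in index_enum {set T} by rewrite mem_index_enum.
elim: (index_enum _) => [//|x s IH] /=.
rewrite inE => /orP[/eqP <-|Ds]; first by rewrite PD geq_minl.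
case: (P x); last exact: IH.
by rewrite geq_min IH // orbT.
Qed.

Lemma bigmin_attained (T : finType) (P : pred {set T}) :
  P setT -> exists D, P D /\ \big[minn/#|T|]_(X : {set T} | P X) #|X| = #|D|.
Proof.
move=> PT; case: (arg_minnP (fun X : {set T} => #|X|) PT) => D PD Dmin.
exists D; split => //; apply/eqP; rewrite eqn_leq bigmin_le //=.
apply: (big_ind (fun x => #|D| <= x)) => //.
- exact: max_card.
- by move=> x y hx hy; rewrite leq_min hx hy.
Qed.

Theorem theorem2p1 (T : finType) (e : rel T) :
  simple_graph e -> connected_graph e -> 3 <= #|T| ->
  (gamma e = gamma_cer e <->
   exists D : {set T}, gamma_set e D /\
     forall v, v \in D -> 2 <= #|nbhd e v :\: D|).
Proof.
move=> [esym eirr] conn cardT.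
have cer_dom : forall D, certified_dominating e D -> dominating e D.
  by move=> D /andP[].
have domT : dominating e setT.
  by apply/forallP => v; rewrite in_setT.
have cerT : certified_dominating e setT.
  rewrite /certified_dominating domT /=; apply/forallP => v; apply/implyP => _.
  by rewrite setDT cards0.
have le_g : gamma e <= gamma_cer e.
  have [D [cD hh]] := @bigmin_attained _ (certified_dominating e) cerT.
  rewrite /gamma_cer hh.
  exact: bigmin_le (cer_dom _ cD).
split.
- move=> geq.
  have [D [cD hD]] := @bigmin_attained _ (certified_dominating e) cerT.
  rewrite -/(gamma_cer e) in hD.
  exists D; split.
    by rewrite /gamma_set (cer_dom _ cD) geq hD eqxx.
  move=> v vD.
  move: (cD) => /andP[dD /forallP /(_ v)]; rewrite vD /= => /orP[/eqP h0|//].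
  exfalso.
  have [w wv] : exists w, w != v.
    case: (pickP (predC1 v)) => [w /= wv|none]; first by exists w.
    have : #|T| <= 1.
      rewrite -(card1 v); apply: subset_leq_card; apply/subsetP => x _.
      by move: (none x) => /= /negbFE; rewrite inE.
    by move=> h; move: (leq_trans cardT h).
  have [u euv] : exists u, e v u.
    move: (conn v w) => /connectP [[|u p] /= pth wl].
      by move: wv; rewrite wl eqxx.
    by exists u; case/andP: pth.
  have h0' : forall x, x \notin D -> ~~ e v x.
    move=> x xD; apply/negP => evx.
    have : x \in nbhd e v :\: D by rewrite !inE xD /= evx.
    by move/cards0_eq: h0 => ->; rewrite inE.
  have uD : u \in D by apply/negPn/negP => /h0'; rewrite euv.
  have uv : u != v by apply/eqP => uv; move: euv; rewrite uv eirr.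
  have dom' : dominating e (D :\ v).
    apply/forallP => x; apply/implyP; rewrite !inE negb_and negbK.
    case/orP => [/eqP -> | xD].
      by apply/existsP; exists u; rewrite !inE uv uD euv.
    move: dD => /forallP /(_ x); rewrite (negbTE xD) /= => /existsP [y /andP[yD exy]].
    apply/existsP; exists y; rewrite !inE yD exy andbT andbT.
    apply/eqP => yv; move: exy; rewrite yv esym => evx.
    by move: (h0' x xD); rewrite evx.
  have := @bigmin_le _ (dominating e) _ dom'.
  rewrite -/(gamma e) geq hD (cardsD1 v D) vD add1n ltnn.
  done.
- case=> D [/andP[dD /eqP cD] h2].
  apply/eqP; rewrite eqn_leq le_g /= -cD.
  apply: bigmin_le; rewrite /certified_dominating dD /=.
  apply/forallP => v; apply/implyP => vD; by rewrite h2 // orbT.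
Qed.
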